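(* Let $C=\{c_1,\dots,c_m\}$ with $m\ge 2$, let $\mathcal{T}$ be a rooted ordered tree whose leaves are exactly the candidates of $C$, and let $F$ be the frequency matrix of the distribution $\mathcal{D}_{\mathrm{GS}}^{\mathcal{T}}$, with rows indexed by positions $1,\dots,m$ and columns indexed by candidates $c_1,\dots,c_m$. (1) If $\mathcal{T}=\mathrm{Flat}(c_1,\dots,c_m)$, then $F=\mathrm{AN}$, i.e., the entry of $F$ for position $i$ and candidate $c_j$ equals $\tfrac12\mathbb{1}_{i=j}+\tfrac12\mathbb{1}_{i=m-j+1}$. (2) If $m$ is a power of two and $\mathcal{T}=\mathrm{Bal}(c_1,\dots,c_m)$, then $F=\mathrm{UN}$, the $m\times m$ matrix with all entries $1/m$. (3) If $\mathcal{T}=\mathrm{CP}(c_1,\dots,c_m)$, then for each $j\in[m]$ and $i\in[m]$, the probability that $c_j$ appears in position $i$ in a vote sampled from $\mathcal{D}_{\mathrm{GS}}^{\mathcal{T}}$ is \[\frac{1}{2^j}\binom{j-1}{i-1}\mathbb{1}_{i\le j}+\frac{1}{2^j}\binom{j-1}{(i-1)-(m-j)}\mathbb{1}_{i>m-j}.\]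
   Context: A vote (preference order) over a finite candidate set $C$ is a total order on $C$; position 1 is the top. A vote distribution $\mathcal{D}$ assigns probabilities to all votes over $C$. Its frequency matrix is $\sum_v \mathcal{D}(v)\cdot \#(v)$, where $\#(v)$ is the $m\times m$ permutation matrix whose entry for position $i$ and candidate $c$ is $1$ iff $c$ is in position $i$ in $v$; equivalently, the entry for position $i$ and candidate $c$ is the probability that $c$ is in position $i$ in a vote sampled from $\mathcal{D}$. For a rooted ordered tree $\mathcal{T}$ whose leaves are the candidates, the frontier is the order of leaves from left to right; a vote is consistent with $\mathcal{T}$ if it is the frontier of the tree obtained by reversing the order of children of some set of internal nodes. $\mathcal{D}_{\mathrm{GS}}^{\mathcal{T}}$ is the uniform distribution over votes consistent with $\mathcal{T}$ (equivalently: reverse each internal node's children independently with probability $1/2$ and output the frontier). $\mathrm{Flat}(c_1,\dots,c_m)$ is the tree with a single internal node (the root) whose children from left to right are $c_1,\dots,c_m$. $\mathrm{Bal}(c_1,\dots,c_m)$ is the perfectly balanced binary tree with frontier $c_1,\dots,c_m$. $\mathrm{CP}(c_1,\dots,c_m)$ (caterpillar) has internal nodes $x_1,\dots,x_{m-1}$, root $x_1$; for $j\in[m-2]$, $x_j$ has left child $c_j$ and right child $x_{j+1}$, and $x_{m-1}$ has children $c_{m-1}$ (left) and $c_m$ (right). $\mathbb{1}$ denotes an indicator. *)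

(* Defs.v *)
From mathcomp Require Import all_boot all_order all_algebra.
Set Implicit Arguments. Unset Strict Implicit. Unset Printing Implicit Defensive.
Import Order.TTheory GRing.Theory Num.Theory.

(* Rooted ordered trees whose leaves are labelled by candidates.
   Candidates c_1..c_m are represented by the natural numbers 1..m. *)
Inductive tree : Type :=
| Leaf of nat
| Node of seq tree.

(* All frontiers of trees obtained from t by reversing the order of the
   children of some set of internal nodes (listed with repetitions; one entry
   per choice of the set of reversed nodes). *)
Fixpoint frontiers (t : tree) : seq (seq nat) :=
  match t with
  | Leaf c => [:: [:: c]]
  | Node ts =>
      let tuples := foldr (fun fs acc => [seq f :: a | f <- fs, a <- acc])
                          [:: [::]] (map frontiers ts) in
      [seq flatten tp | tp <- tuples] ++ [seq flatten (rev tp) | tp <- tuples]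
  end.

Definition consistent_votes (t : tree) : seq (seq nat) := undup (frontiers t).

(* Frequency matrix of D_GS^t (uniform distribution over consistent votes):
   entry for position i (1-indexed) and candidate c = probability that c is
   in position i. *)
Definition freqGS (t : tree) (i c : nat) : rat :=
  let V := consistent_votes t in
  (count (fun v => nth 0%N v i.-1 == c) V)%:R / (size V)%:R.

Definition Flat (m : nat) : tree := Node [seq Leaf j | j <- iota 1 m].

Fixpoint bal (k off : nat) : tree :=
  match k with
  | 0 => Leaf off
  | k'.+1 => Node [:: bal k' off; bal k' (off + 2 ^ k')]
  end.
Definition Bal (k : nat) : tree := bal k 1.

(* caterpillar starting at candidate j with k+2 leaves c_j..c_{j+k+1} *)
Fixpoint cp (j k : nat) : tree :=
  match k with
  | 0 => Node [:: Leaf j; Leaf j.+1]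
  | k'.+1 => Node [:: Leaf j; cp j.+1 k']
  end.
Definition CP (m : nat) : tree := cp 1 (m - 2).

(* Main.v *)
Require Import Defs.
From mathcomp Require Import all_boot all_order all_algebra.
From mathcomp Require Import zify.
Import Order.TTheory GRing.Theory Num.Theory.

Lemma frontiers2 t1 t2 : frontiers (Node [:: t1; t2]) =
  [seq f1 ++ f2 | f1 <- frontiers t1, f2 <- frontiers t2] ++
  [seq f2 ++ f1 | f1 <- frontiers t1, f2 <- frontiers t2].
Proof.
rewrite /=; congr (_ ++ _).
  elim: (frontiers t1) => //= f1 F1 IH; rewrite map_cat IH; congr (_ ++ _).
  elim: (frontiers t2) => //= f2 F2 IH2; by rewrite cats0 IH2.
elim: (frontiers t1) => //= f1 F1 IH; rewrite map_cat IH; congr (_ ++ _).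
elim: (frontiers t2) => //= f2 F2 IH2; by rewrite cats0 IH2.
Qed.

Lemma uniq_node t1 t2 n1 n2 (Q1 Q2 : pred nat) :
  uniq (frontiers t1) -> uniq (frontiers t2) ->
  all (fun v => size v == n1) (frontiers t1) ->
  all (fun v => size v == n2) (frontiers t2) -> (0 < n1)%N -> (0 < n2)%N ->
  all (all Q1) (frontiers t1) -> all (all Q2) (frontiers t2) ->
  (forall x, Q1 x -> Q2 x -> False) ->
  uniq (frontiers (Node [:: t1; t2])).
Proof.
move=> u1 u2 s1 s2 n1p n2p q1 q2 dq; rewrite frontiers2 cat_uniq.
apply/and3P; split.
- apply: allpairs_uniq => // [[a b] [a' b']] /allpairsP [[x y] /= [hx hy [-> ->]]]
    /allpairsP [[x' y'] /= [hx' hy' [-> ->]]] /= /eqP.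
  rewrite eqseq_cat; last by rewrite (eqP (allP s1 _ hx)) (eqP (allP s1 _ hx')).
  by case/andP=> /eqP -> /eqP ->.
- apply/hasPn => v /allpairsP [[x y] /= [hx hy ->]]; apply/negP.
  case/allpairsP => [[x' y'] /= [hx' hy' e]].
  have sy : size y = n2 by apply/eqP/(allP s2).
  have sx' : size x' = n1 by apply/eqP/(allP s1).
  have := congr1 (fun s => nth 0%N s 0) e; rewrite /= !nth_cat sy sx' n1p n2p => e0.
  apply: (dq (nth 0%N x' 0)).
    by apply: (allP (allP q1 _ hx')); apply: mem_nth; rewrite sx'.
  by rewrite -e0; apply: (allP (allP q2 _ hy)); apply: mem_nth; rewrite sy.
- apply: allpairs_uniq => // [[a b] [a' b']] /allpairsP [[x y] /= [hx hy [-> ->]]]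
    /allpairsP [[x' y'] /= [hx' hy' [-> ->]]] /= /eqP.
  rewrite eqseq_cat; last by rewrite (eqP (allP s2 _ hy)) (eqP (allP s2 _ hy')).
  by case/andP=> /eqP -> /eqP ->.
Qed.
Definition cnt (F : seq (seq nat)) p c := count (fun v => nth 0%N v p == c) F.

Lemma cnt_cat A B p c : cnt (A ++ B) p c = (cnt A p c + cnt B p c)%N.
Proof. by rewrite /cnt count_cat. Qed.

Lemma cnt_pairs1 F1 F2 n1 p c : all (fun v => size v == n1) F1 ->
  cnt [seq f1 ++ f2 | f1 <- F1, f2 <- F2] p c =
  if (p < n1)%N then (cnt F1 p c * size F2)%N else (size F1 * cnt F2 (p - n1) c)%N.
Proof.
elim: F1 => [|f1 F1 IH]; first by rewrite /=; case: ifP.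
rewrite /=; case/andP=> /eqP s1 /IH {}IH; rewrite cnt_cat IH /cnt count_map.
case: ifP => hp.
  rewrite mulnDl; congr (_ + _)%N.
  under eq_count => f2 do rewrite /= nth_cat s1 hp.
  by case: (nth 0%N f1 p == c); rewrite ?count_pred0 ?count_predT /= ?mul1n ?mul0n.
rewrite mulSn; congr (_ + _)%N.
by under eq_count => f2 do rewrite /= nth_cat s1 hp.
Qed.

Lemma cnt_pairs2 F1 F2 n2 p c : all (fun v => size v == n2) F2 ->
  cnt [seq f2 ++ f1 | f1 <- F1, f2 <- F2] p c =
  if (p < n2)%N then (size F1 * cnt F2 p c)%N else (cnt F1 (p - n2) c * size F2)%N.
Proof.
move=> h2; elim: F1 => [|f1 F1 IH]; first by rewrite /=; case: ifP. rewrite ?muln0.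
rewrite /= cnt_cat IH /cnt count_map.
case: ifP => hp.
  rewrite mulSn; congr (_ + _)%N.
  by apply: eq_in_count => f2 /(allP h2) /eqP s2 /=; rewrite nth_cat s2 hp.
rewrite mulnDl; congr (_ + _)%N.
rewrite -[size F2]count_predT; rewrite (eq_in_count (a2 := fun f2 => (nth 0%N f1 (p - n2) == c) && true)).
  by case: (nth 0%N f1 (p - n2) == c); rewrite ?count_pred0 /= ?mul1n ?mul0n.
by move=> f2 /(allP h2) /eqP s2 /=; rewrite nth_cat s2 hp andbT.
Qed.

Lemma size_node t1 t2 : size (frontiers (Node [:: t1; t2])) =
  (2 * (size (frontiers t1) * size (frontiers t2)))%N.
Proof. by rewrite frontiers2 size_cat !size_allpairs addnn -mul2n. Qed.

Lemma sizes_node t1 t2 n1 n2 :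
  all (fun v => size v == n1) (frontiers t1) ->
  all (fun v => size v == n2) (frontiers t2) ->
  all (fun v => size v == n1 + n2)%N (frontiers (Node [:: t1; t2])).
Proof.
move=> s1 s2; rewrite frontiers2 all_cat; apply/andP; split; apply/allP => v
  /allpairsP [[x y] /= [hx hy ->]]; rewrite size_cat (eqP (allP s1 _ hx)) (eqP (allP s2 _ hy)) //.
by rewrite addnC.
Qed.

Lemma elems_node t1 t2 (Q : pred nat) :
  all (all Q) (frontiers t1) -> all (all Q) (frontiers t2) ->
  all (all Q) (frontiers (Node [:: t1; t2])).
Proof.
move=> s1 s2; rewrite frontiers2 all_cat; apply/andP; split; apply/allP => v
  /allpairsP [[x y] /= [hx hy ->]]; by rewrite all_cat (allP s1 _ hx) (allP s2 _ hy).
Qed.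

Lemma all_weak (Q1 Q : pred nat) F : (forall x, Q1 x -> Q x) -> all (all Q1) F -> all (all Q) F.
Proof. move=> h /allP a; apply/allP => v /a /allP b; apply/allP => x /b; exact: h. Qed.

Fixpoint sb k := if k is k'.+1 then (2 * (sb k' * sb k'))%N else 1%N.

Lemma sb_gt0 k : (0 < sb k)%N.
Proof. elim: k => //= k IH; by rewrite !muln_gt0 IH. Qed.

Lemma arith1 a b s K B1 B2 : (a * K = s * B1)%N -> (b * K = s * B2)%N ->
  ((a * s + s * b) * (2 * K) = 2 * (s * s) * (B1 + B2))%N.
Proof. move=> *; nia. Qed.

Lemma bal_inv k off : let F := frontiers (bal k off) in
 [/\ uniq F, all (fun v => size v == 2^k)%N F,
     all (all (fun x => off <= x < off + 2^k)%N) F, size F = sb k &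
  forall p c, (p < 2^k)%N -> (cnt F p c * 2^k = sb k * (off <= c < off + 2^k))%N].
Proof.
elim: k off => [|k IH] off.
  rewrite /=; split => //; first by rewrite addn1 leqnn ltnSn.
  move=> [|p] c //= _; rewrite /cnt /= addn1 muln1 mul1n ltnS eq_sym -eqn_leq.
  by rewrite addn0 eq_sym.
move=> F; rewrite /F; change (bal k.+1 off) with (Node [:: bal k off; bal k (off + 2^k)]).
have [u1 s1 e1 z1 c1] := IH off; have [u2 s2 e2 z2 c2] := IH (off + 2^k)%N.
have k0 : (0 < 2^k)%N by rewrite expn_gt0.
split.
- have := uniq_node _ _ _ _ _ _ u1 u2 s1 s2 k0 k0 e1 e2; apply =>  x /andP [_ h1] /andP [h2 _].
  by move: (leq_trans h1 h2); rewrite ltnn.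
- by rewrite expnS mul2n -addnn; apply: sizes_node.
- apply: elems_node; [apply: (all_weak _ _ _ _ e1) | apply: (all_weak _ _ _ _ e2)] => x; rewrite expnS; lia.
- by rewrite size_node z1 z2.
move=> p c hp; rewrite frontiers2 cnt_cat (cnt_pairs1 _ _ _ _ _ s1) (cnt_pairs2 _ _ _ _ _ s2) z1 z2.
case: ifP => hpk.
  have h1 := c1 p c hpk; have h2 := c2 p c hpk.
  have hb : ((off <= c < off + 2^k) + (off + 2^k <= c < off + 2^k + 2^k))%N
     = (off <= c < off + 2^k.+1)%N by rewrite expnS; lia.
  rewrite -hb expnS /=; exact: arith1.
have hpk' : (p - 2^k < 2^k)%N by move: hp; rewrite expnS; lia.
have h1 := c1 _ c hpk'; have h2 := c2 _ c hpk'.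
have hb : ((off <= c < off + 2^k) + (off + 2^k <= c < off + 2^k + 2^k))%N
   = (off <= c < off + 2^k.+1)%N by rewrite expnS; lia.
rewrite -hb expnS /= addnC; exact: arith1.
Qed.
Lemma binA (p d k : nat) : (d <= k.+1)%N ->
  ((0 < p) * ('C(d, p.-1) * (p.-1 <= d)) + (p < k.+2) * ('C(d, p) * (p <= d)))%N
  = ('C(d.+1, p) * (p <= d.+1))%N.
Proof.
move=> hd; case: p => [|p] /=; first by rewrite !bin0.
rewrite binS addnC mul1n !ltnS.
have [h|h] := leqP p d; last first.
  by rewrite !bin_small ?(leq_trans h) // ?muln0 //.
rewrite muln1 mulnDl; congr (_ + _)%N.
have [h2|h2] := ltnP p d.
  by rewrite (_ : (p <= k)%N = true) ?muln1 ?mul1n //; lia.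
by rewrite bin_small ?muln0 ?mul0n //; lia.
by rewrite muln1.
Qed.

Lemma binB (p d k : nat) : (d <= k.+1)%N -> (p < k.+3)%N ->
  ((0 < p) * ('C(d, p.-1 - (k.+1 - d)) * (k.+1 - d <= p.-1)) + (p < k.+2) * ('C(d, p - (k.+1 - d)) * (k.+1 - d <= p)))%N
  = ('C(d.+1, p - (k.+1 - d)) * (k.+1 - d <= p))%N.
Proof.
move=> hd; set e := (k.+1 - d)%N.
case: p => [|p] hp.
  rewrite !sub0n !bin0 /=; lia.
rewrite /= mul1n.
have [h|h] := leqP e p.
  rewrite (_ : (e <= p.+1)%N = true); last by lia.
  rewrite subSn // binS addnC !muln1; congr (_ + _)%N.
  have [h2|h2] := ltnP p.+1 k.+2; first by rewrite mul1n.
  by rewrite mul0n bin_small //; lia.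
rewrite muln0 add0n.
have [h2|h2] := leqP e p.+1; last by rewrite !muln0.
have pe : e = p.+1 by lia.
rewrite pe subnn !bin0 (_ : (p.+1 < k.+2)%N = true) //; lia.
Qed.

Definition Pcp j k F :=
 [/\ uniq F, all (fun v => size v == k.+2)%N F, all (all (fun x => j <= x < j + k.+2)%N) F,
   size F = (2^k.+1)%N &
   forall p d, (p < k.+2)%N -> (d < k.+2)%N -> (2 * cnt F p (j + d) =
     2^(k.+1 - d) * ('C(d,p) * (p <= d) + 'C(d, p - (k.+1 - d)) * (k.+1 - d <= p)))%N].

Lemma cnt0 F n (Q : pred nat) p c : all (all Q) F -> all (fun v => size v == n)%N F ->
  (p < n)%N -> ~~ Q c -> cnt F p c = 0%N.
Proof.
move=> hq hs hp hc; apply/eqP; rewrite -leqn0 leqNgt -has_count; apply/hasPn => v hv /=.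
apply/eqP => e; move: hc; rewrite -e (allP (allP hq _ hv)) //.
by apply: mem_nth; rewrite (eqP (allP hs _ hv)).
Qed.

Lemma cp_step j k t2 : Pcp j.+1 k (frontiers t2) -> Pcp j k.+1 (frontiers (Node [:: Leaf j; t2])).
Proof.
case=> u2 s2 e2 z2 c2.
have s1 : all (fun v => size v == 1)%N (frontiers (Leaf j)) by [].
have e1 : all (all (fun x => x == j)) (frontiers (Leaf j)) by rewrite /= eqxx.
split.
- apply: (uniq_node _ _ _ _ _ _ _ u2 s1 s2 _ _ e1 e2) => // x /eqP ->; lia.
- have := sizes_node _ _ _ _ s1 s2; by rewrite add1n.
- by apply: elems_node; [apply: (all_weak _ _ _ _ e1) | apply: (all_weak _ _ _ _ e2)] => x; lia.
- by rewrite size_node z2 /= mul1n -expnS.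
move=> p d hp hd.
rewrite frontiers2 cnt_cat (cnt_pairs1 _ _ _ _ _ s1) (cnt_pairs2 _ _ _ _ _ s2) z2 /=.
case: d hd => [|d] hd.
  rewrite addn0.
  have z0 : forall q, (q < k.+2)%N -> cnt (frontiers t2) q j = 0%N.
    move=> q hq; apply: (cnt0 _ _ _ _ _ e2 s2 hq); lia.
  rewrite subn0 !addn0 !mul1n.
  case: p hp => [|p] hp.
    rewrite /= eqxx /= z0 // bin0 !expnS; lia.
  rewrite (_ : (p.+1 < 1)%N = false) // (_ : (p.+1 <= 0)%N = false) // muln0 add0n subn1 /=.
  rewrite z0 ?add0n; last by lia.
  case: ifP => hpk.
    by rewrite z0 // muln0 (_ : (k.+1 < p.+1)%N = false) //; lia.
  have pe : p = k.+1 by lia.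
  rewrite pe subnn /= eqxx /= bin0 ltnSn !expnS; lia.
have hd' : (d <= k.+1)%N by move: hd; rewrite !ltnS.
have nj : forall q, (nth 0%N [:: j] q == j + d.+1) = false.
  by move=> [|q] /=; [|rewrite nth_nil]; lia.
rewrite (_ : (k.+2 - d.+1 = k.+1 - d)%N) // -(binA p d k hd') -(binB p d k hd' hp).
rewrite !nj -addSnnS.
case: p hp => [|p] hp.
  have := c2 0%N d isT hd; rewrite /=; lia.
have := c2 p d _ hd; rewrite /= subn1 /=.
case: ifP => hpk.
  have := c2 p.+1 d hpk hd; lia.
have hpk2 : (p < k.+2)%N by lia.
move=> /(_ hpk2); lia.
Qed.

Lemma cp_inv k j : Pcp j k (frontiers (cp j k)).
Proof.
elim: k j => [|k IH] j; last first.
  change (cp j k.+1) with (Node [:: Leaf j; cp j.+1 k]); exact: cp_step.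
split => //=.
- rewrite andbT inE; apply/negP => /eqP [] ; lia.
- rewrite !andbT; apply/and3P; split; lia.
- move=> [|[|p]] [|[|d]] //= _ _. all: rewrite ?addn0 ?addn1 ?eqxx ?(ltn_eqF (ltnSn j)) ?(gtn_eqF (ltnSn j)) //=.
Qed.
Lemma flat_frontiers s : frontiers (Node [seq Leaf j | j <- s]) = [:: s; rev s].
Proof.
have H : foldr (fun fs acc => [seq f :: a | f <- fs, a <- acc]) [:: [::]]
   [seq frontiers i | i <- [seq Leaf j | j <- s]] = [:: [seq [:: j] | j <- s]].
  by elim: s => //= x s ->.
by rewrite /= H /= flatten_seq1 -map_rev flatten_seq1.
Qed.

Local Open Scope ring_scope.

Lemma part1 (m : nat) (hm : (2 <= m)%N) (i j : nat) : (1 <= i <= m)%N -> (1 <= j <= m)%N ->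
     freqGS (Flat m) i j
     = 2^-1 * (i == j)%:R + 2^-1 * (i == m - j + 1)%N%:R.
Proof.
move=> /andP [i1 im] /andP [j1 jm].
rewrite /freqGS /consistent_votes /Flat flat_frontiers.
have ne : (iota 1 m == rev (iota 1 m)) = false.
  apply/negP => /eqP e; have := congr1 (fun s => nth 0%N s 0) e.
  rewrite /= nth_rev size_iota; last by lia.
  rewrite nth_iota ?nth_iota; lia.
rewrite /= inE ne /=.
rewrite nth_iota; last by lia.
rewrite nth_rev size_iota; last by lia.
rewrite nth_iota; last by lia.
have -> : (1 + (m - (i.-1).+1) == j)%N = (i == m - j + 1)%N.
  by apply/idP/idP => /eqP h; apply/eqP; lia.
have -> : (1 + i.-1 = i)%N by lia.
by rewrite addn0 natrD mulrDl !(mulrC 2^-1).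
Qed.

Lemma part2 (m : nat) (k : nat) : m = (2 ^ k)%N ->
     forall i j : nat, (1 <= i <= m)%N -> (1 <= j <= m)%N ->
       freqGS (Bal k) i j = (m%:R)^-1.
Proof.
move=> -> i j /andP [i1 im] /andP [j1 jm].
have [u _ _ z c] := bal_inv k 1.
rewrite /freqGS /consistent_votes /Bal undup_id // z.
have := c i.-1 j; rewrite -/(cnt _ _ _).
move=> /(_ _) H; have {}H := H ltac:(lia).
rewrite (_ : (1 <= j < 1 + 2 ^ k)%N = true) ?muln1 in H; last by lia.
have s0 := sb_gt0 k.
rewrite -H natrM invfM mulrA mulfV ?mul1r //.
rewrite pnatr_eq0 -lt0n; move: s0; rewrite -H muln_gt0; by case/andP.
Qed.

Lemma part3 (m : nat) (hm : (2 <= m)%N) (i j : nat) : (1 <= i <= m)%N -> (1 <= j <= m)%N ->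
     freqGS (CP m) i j
     = (2 ^+ j)^-1 * ('C(j - 1, i - 1)%:R * (i <= j)%N%:R)
       + (2 ^+ j)^-1 * ('C(j - 1, (i - 1) - (m - j))%:R * (m - j < i)%N%:R).
Proof.
move=> /andP [i1 im] /andP [j1 jm].
have [u _ _ z c] := cp_inv (m - 2) 1.
rewrite /freqGS /consistent_votes /CP undup_id // z.
set k := (m - 2)%N.
have mk : m = k.+2 by rewrite /k; lia.
have H := c i.-1 j.-1 ltac:(lia) ltac:(lia).
rewrite (_ : (1 + j.-1 = j)%N) in H; last by lia.
rewrite -/(cnt _ _ _).
set X := ('C(j.-1, i.-1) * (i.-1 <= j.-1) + 'C(j.-1, i.-1 - (k.+1 - j.-1)) * (k.+1 - j.-1 <= i.-1))%N in H.
have E : ('C(j - 1, i - 1)%:R * (i <= j)%N%:R + 'C(j - 1, (i - 1) - (m - j))%:R * (m - j < i)%N%:R : rat) = X%:R.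
  rewrite /X natrD !natrM -!subn1; congr (_ * _%:R + _ * _%:R); try (congr (_%:R); congr 'C(_, _)); lia.
rewrite -mulrDr E.
have N : (cnt (frontiers (cp 1 k)) i.-1 j * 2 ^ j = X * 2 ^ k.+1)%N.
  have e1 : (2 ^ j = 2 * 2 ^ j.-1)%N by rewrite -expnS; congr (_ ^ _)%N; lia.
  have e2 : (2 ^ k.+1 = 2 ^ (k.+1 - j.-1) * 2 ^ j.-1)%N by rewrite -expnD; congr (_ ^ _)%N; lia.
  by rewrite e1 e2 mulnA (mulnC _ 2) H mulnA (mulnC X).
apply: (canLR (mulfK _)); first by rewrite pnatr_eq0 expn_eq0.
rewrite -mulrA -natrM -N natrM natrX mulrCA mulVf ?mulr1 //.
by rewrite expf_neq0 // pnatr_eq0.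
Qed.

Theorem theorem1 (m : nat) (hm : (2 <= m)%N) :
  (* (1) Flat gives AN *)
  (forall i j : nat, (1 <= i <= m)%N -> (1 <= j <= m)%N ->
     freqGS (Flat m) i j
     = 2^-1 * (i == j)%:R + 2^-1 * (i == m - j + 1)%N%:R)
  /\
  (* (2) Bal with m a power of two gives UN *)
  (forall k : nat, m = (2 ^ k)%N ->
     forall i j : nat, (1 <= i <= m)%N -> (1 <= j <= m)%N ->
       freqGS (Bal k) i j = (m%:R)^-1)
  /\
  (* (3) caterpillar *)
  (forall i j : nat, (1 <= i <= m)%N -> (1 <= j <= m)%N ->
     freqGS (CP m) i j
     = (2 ^+ j)^-1 * ('C(j - 1, i - 1)%:R * (i <= j)%N%:R)
       + (2 ^+ j)^-1 * ('C(j - 1, (i - 1) - (m - j))%:R * (m - j < i)%N%:R)).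
Proof.
split; first exact: part1.
split; first exact: part2.
exact: part3.
Qed.
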